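(* Let $G$ be the two-player game with $A_1=\{\text{Faithful},\text{Philandering}\}$, $A_2=\{\text{Coy},\text{Fast}\}$ and fitness vectors $\pi(\text{Faithful},\text{Coy})=(2,2)$, $\pi(\text{Faithful},\text{Fast})=(5,5)$, $\pi(\text{Philandering},\text{Coy})=(0,0)$, $\pi(\text{Philandering},\text{Fast})=(15,-5)$. Then the pure strategy profile $(\text{Faithful},\text{Fast})$ is stable under perfect observability.
   Context: Preference types: $\Theta=\mathbb{R}^A$, $A=A_1\times A_2$ (utility functions on $A$, extended bilinearly to mixed profiles). $\mathcal{M}(\Theta^2)$ is the set of product distributions $\mu=\mu_1\times\mu_2$ on $\Theta^2$ with finitely supported marginals; $\operatorname{supp}\mu=\operatorname{supp}\mu_1\times\operatorname{supp}\mu_2$, $\mu_{-i}=\mu_j$ ($j\neq i$). Mutants: for nonempty $J\subseteq\{1,2\}$, a mutant sub-profile is $\tilde\theta_J\in\prod_{j\in J}(\Theta\setminus\operatorname{supp}\mu_j)$ with shares $\varepsilon\in(0,1)^{|J|}$, $\|\varepsilon\|=\max_j\varepsilon_j$; post-entry $\tilde\mu^\varepsilon_i=(1-\varepsilon_i)\mu_i+\varepsilon_i\delta_{\tilde\theta_i}$ for $i\in J$, $\tilde\mu^\varepsilon_i=\mu_i$ otherwise. Perfect observability: an equilibrium is a map $b:\operatorname{supp}\mu\to\Delta(A_1)\times\Delta(A_2)$ such that each $b(\theta)$ is a Nash equilibrium of the game with payoffs $\theta_1,\theta_2$; $B_1(\mu)$ is the set of these; $(\mu,b)$ is a configuration,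 with aggregate outcome $\varphi_{\mu,b}(a)=\sum_{\theta}\mu(\theta)\prod_i b_i(\theta)(a_i)$. Average fitness $\Pi_{\theta_i}(\mu;b)=\sum_{\theta'_{-i}}\mu_{-i}(\theta'_{-i})\pi_i(b(\theta_i,\theta'_{-i}))$. Balanced: equal average fitness of all types within each population. Focal set $B_1(\tilde\mu^\varepsilon;b)=\{\tilde b\in B_1(\tilde\mu^\varepsilon):\tilde b=b\text{ on }\operatorname{supp}\mu\}$. $(\mu,b)$ is stable if balanced and for every nonempty $J$ and every $\tilde\theta_J$ there is $\bar\epsilon\in(0,1)$ such that for all $\varepsilon$ with $\|\varepsilon\|<\bar\epsilon$ and all $\tilde b$ in the focal set, either (i) some $j\in J$ has $\Pi_{\theta_j}(\tilde\mu^\varepsilon;\tilde b)>\Pi_{\tilde\theta_j}(\tilde\mu^\varepsilon;\tilde b)$ for all $\theta_j\in\operatorname{supp}\mu_j$, or (ii) for every $i$ all types in $\operatorname{supp}\tilde\mu^\varepsilon_i$ have equal average fitness. A profile $\sigma$ is stable if $\varphi_\sigma(a)=\prod_i\sigma_i(a_i)$ is the aggregate outcome of a stable configuration. *)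

(* Defs.v *)
From Stdlib Require Import Reals List.
Import ListNotations.
Open Scope R_scope.

Inductive A1 : Type := Faithful | Philandering.
Inductive A2 : Type := Coy | Fast.

(* Preference types: utility functions on A = A1 x A2 *)
Definition Theta : Type := A1 -> A2 -> R.

Definition pi1 (a1 : A1) (a2 : A2) : R :=
  match a1, a2 with
  | Faithful, Coy => 2 | Faithful, Fast => 5
  | Philandering, Coy => 0 | Philandering, Fast => 15 end.
Definition pi2 (a1 : A1) (a2 : A2) : R :=
  match a1, a2 with
  | Faithful, Coy => 2 | Faithful, Fast => 5
  | Philandering, Coy => 0 | Philandering, Fast => -5 end.

Definition mixed1 (s : A1 -> R) : Prop :=
  0 <= s Faithful /\ 0 <= s Philandering /\ s Faithful + s Philandering = 1.
Definition mixed2 (s : A2 -> R) : Prop :=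
  0 <= s Coy /\ 0 <= s Fast /\ s Coy + s Fast = 1.

Definition eu (u : A1 -> A2 -> R) (s1 : A1 -> R) (s2 : A2 -> R) : R :=
  s1 Faithful * s2 Coy * u Faithful Coy + s1 Faithful * s2 Fast * u Faithful Fast
  + s1 Philandering * s2 Coy * u Philandering Coy
  + s1 Philandering * s2 Fast * u Philandering Fast.

Definition profile : Type := ((A1 -> R) * (A2 -> R))%type.

Definition nash (t1 t2 : Theta) (s : profile) : Prop :=
  mixed1 (fst s) /\ mixed2 (snd s) /\
  (forall s1', mixed1 s1' -> eu t1 s1' (snd s) <= eu t1 (fst s) (snd s)) /\
  (forall s2', mixed2 s2' -> eu t2 (fst s) s2' <= eu t2 (fst s) (snd s)).

(* Finitely supported distributions on Theta: list of (type, weight) with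
   distinct types, positive weights summing to 1. *)
Definition dist : Type := list (Theta * R).
Definition supp (m : dist) : list Theta := map fst m.
Definition lsum (m : dist) (f : Theta -> R -> R) : R :=
  fold_right (fun p acc => f (fst p) (snd p) + acc) 0 m.
Definition valid_dist (m : dist) : Prop :=
  NoDup (supp m) /\ (forall p, In p m -> 0 < snd p) /\ lsum m (fun _ w => w) = 1.

(* Equilibrium maps (only their values on supp mu matter) *)
Definition eqmap : Type := Theta -> Theta -> profile.

Definition B1 (mu1 mu2 : dist) (b : eqmap) : Prop :=
  forall t1 t2, In t1 (supp mu1) -> In t2 (supp mu2) -> nash t1 t2 (b t1 t2).

Definition Pi1 (mu2 : dist) (b : eqmap) (t1 : Theta) : R :=
  lsum mu2 (fun t2 w => w * eu pi1 (fst (b t1 t2)) (snd (b t1 t2))).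
Definition Pi2 (mu1 : dist) (b : eqmap) (t2 : Theta) : R :=
  lsum mu1 (fun t1 w => w * eu pi2 (fst (b t1 t2)) (snd (b t1 t2))).

Definition balanced (mu1 mu2 : dist) (b : eqmap) : Prop :=
  (forall t t', In t (supp mu1) -> In t' (supp mu1) -> Pi1 mu2 b t = Pi1 mu2 b t') /\
  (forall t t', In t (supp mu2) -> In t' (supp mu2) -> Pi2 mu1 b t = Pi2 mu1 b t').

(* Post-entry population (1 - e) mu + e delta_t *)
Definition entry (m : dist) (t : Theta) (e : R) : dist :=
  map (fun p => (fst p, (1 - e) * snd p)) m ++ [(t, e)].

Definition focal (mu1 mu2 mu1' mu2' : dist) (b b' : eqmap) : Prop :=
  B1 mu1' mu2' b' /\
  (forall t1 t2, In t1 (supp mu1) -> In t2 (supp mu2) -> b' t1 t2 = b t1 t2).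

(* Mutants indexed by J = {i | Ji = true}; t_i, e_i are only meaningful for i in J. *)
Definition resists (mu1 mu2 : dist) (b : eqmap) (J1 J2 : bool) (t1 t2 : Theta) : Prop :=
  exists ebar, 0 < ebar < 1 /\
  forall e1 e2 : R,
    (J1 = true -> 0 < e1 < ebar) -> (J2 = true -> 0 < e2 < ebar) ->
    let mu1' := if J1 then entry mu1 t1 e1 else mu1 in
    let mu2' := if J2 then entry mu2 t2 e2 else mu2 in
    forall b' : eqmap, focal mu1 mu2 mu1' mu2' b b' ->
      ((J1 = true /\ forall t, In t (supp mu1) -> Pi1 mu2' b' t > Pi1 mu2' b' t1) \/
       (J2 = true /\ forall t, In t (supp mu2) -> Pi2 mu1' b' t > Pi2 mu1' b' t2))
      \/ balanced mu1' mu2' b'.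

Definition stable_config (mu1 mu2 : dist) (b : eqmap) : Prop :=
  balanced mu1 mu2 b /\
  forall (J1 J2 : bool), (J1 = true \/ J2 = true) ->
  forall t1 t2 : Theta,
    (J1 = true -> ~ In t1 (supp mu1)) -> (J2 = true -> ~ In t2 (supp mu2)) ->
    resists mu1 mu2 b J1 J2 t1 t2.

Definition aggregate (mu1 mu2 : dist) (b : eqmap) (a1 : A1) (a2 : A2) : R :=
  lsum mu1 (fun t1 w1 => lsum mu2 (fun t2 w2 =>
    w1 * w2 * (fst (b t1 t2) a1 * snd (b t1 t2) a2))).

Definition stable_profile (s1 : A1 -> R) (s2 : A2 -> R) : Prop :=
  exists (mu1 mu2 : dist) (b : eqmap),
    valid_dist mu1 /\ valid_dist mu2 /\ B1 mu1 mu2 b /\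
    stable_config mu1 mu2 b /\
    (forall a1 a2, aggregate mu1 mu2 b a1 a2 = s1 a1 * s2 a2).

Definition pure1 (a : A1) : A1 -> R :=
  fun x => match a, x with
           | Faithful, Faithful | Philandering, Philandering => 1 | _, _ => 0 end.
Definition pure2 (a : A2) : A2 -> R :=
  fun x => match a, x with
           | Coy, Coy | Fast, Fast => 1 | _, _ => 0 end.

(* Main.v *)
Require Import Defs.
From Stdlib Require Import Reals List Lra Psatz.
Import ListNotations.
Open Scope R_scope.

Definition th : Theta := fun a1 a2 =>
  match a1, a2 with Philandering, Coy => 1 | _, _ => 0 end.

Definition E1 (s : profile) := eu pi1 (fst s) (snd s).
Definition E2 (s : profile) := eu pi2 (fst s) (snd s).

Lemma mixed_facts s : mixed1 (fst s) -> mixed2 (snd s) ->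
  E2 s <= 5 /\ E1 s + E2 s <= 10.
Proof.
  destruct s as [p q]; unfold mixed1, mixed2, E1, E2, eu; simpl.
  intros [h1 [h2 h3]] [k1 [k2 k3]].
  assert (0 <= p Faithful * q Coy) by nra.
  assert (0 <= p Faithful * q Fast) by nra.
  assert (0 <= p Philandering * q Coy) by nra.
  assert (0 <= p Philandering * q Fast) by nra.
  assert (p Faithful * q Coy + p Faithful * q Fast + p Philandering * q Coy
          + p Philandering * q Fast = 1) by nra.
  split; lra.
Qed.

Lemma nash_col t s : nash t th s ->
  E1 s = E2 s /\ 0 <= E1 s <= 5.
Proof.
  destruct s as [p q]; intros [Hm1 [Hm2 [_ H4]]]; simpl in *.
  specialize (H4 (pure2 Coy)).
  assert (Hc : mixed2 (pure2 Coy)) by (unfold mixed2; simpl; lra).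
  specialize (H4 Hc).
  unfold mixed1, mixed2, E1, E2, eu in *; simpl in *.
  destruct Hm1 as [h1 [h2 h3]]; destruct Hm2 as [k1 [k2 k3]].
  assert (0 <= p Philandering * q Fast) by nra.
  assert (p Philandering * q Fast = 0) by nra.
  assert (0 <= p Faithful * q Coy) by nra.
  assert (0 <= p Faithful * q Fast) by nra.
  assert (p Faithful * q Coy + p Faithful * q Fast = p Faithful) by nra.
  split; [lra|split; lra].
Qed.

Lemma nash_row t s : nash th t s ->
  E2 s <= 5 /\ (E1 s = 10 - E2 s \/ (E2 s <= 0 /\ 0 <= E1 s)).
Proof.
  destruct s as [p q]; intros [Hm1 [Hm2 [H3 _]]]; simpl in *.
  specialize (H3 (pure1 Philandering)).
  assert (Hc : mixed1 (pure1 Philandering)) by (unfold mixed1; simpl; lra).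
  specialize (H3 Hc).
  unfold mixed1, mixed2, E1, E2, eu in *; simpl in *.
  destruct Hm1 as [h1 [h2 h3]]; destruct Hm2 as [k1 [k2 k3]].
  assert (0 <= p Faithful * q Coy) by nra.
  assert (p Faithful * q Coy = 0) by nra.
  split.
  - nra.
  - destruct (Rmult_integral _ _ H0) as [E|E].
    + right. rewrite E. replace (p Philandering) with 1 by lra. nra.
    + left. replace (q Fast) with 1 by lra. rewrite E. lra.
Qed.

Lemma arith e1 e2 a c d1 al d2 :
  0 < e1 < 1/2 -> 0 < e2 < 1/2 -> 0 <= a <= 5 -> al <= 5 -> d2 <= 5 ->
  d1 + d2 <= 10 -> (c = 10 - al \/ (al <= 0 /\ 0 <= c)) ->
  ((1-e2)*5 + e2*c > (1-e2)*a + e2*d1) \/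
  ((1-e1)*5 + e1*a > (1-e1)*al + e1*d2) \/
  ((1-e2)*5 + e2*c = (1-e2)*a + e2*d1 /\ (1-e1)*5 + e1*a = (1-e1)*al + e1*d2).
Proof.
  intros He1 He2 Ha Hal Hd2 Hd Hc.
  destruct (Rlt_or_le ((1-e2)*a + e2*d1) ((1-e2)*5 + e2*c)) as [L1|L1]; [left; lra|].
  destruct (Rlt_or_le ((1-e1)*al + e1*d2) ((1-e1)*5 + e1*a)) as [L2|L2]; [right; left; lra|].
  right; right.
  destruct Hc as [Hc|[Hc1 Hc2]].
  - subst c.
    assert (a <= d2) by nra.
    assert (Hx : (1 - 2*e2) * (5 - a) <= - e2 * (5 - al)) by nra.
    assert (a = 5) by nra.
    assert (al = 5) by nra.
    subst. assert (d2 = 5) by nra. subst. split; nra.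
  - exfalso. nra.
Qed.

Definition m0 : Defs.dist := [(th, 1)].
Definition b0 : eqmap := fun _ _ => (pure1 Faithful, pure2 Fast).

Lemma all_eq (f : Theta -> R) (l : list Theta) k :
  (forall t, In t l -> f t = k) ->
  forall t t', In t l -> In t' l -> f t = f t'.
Proof. intros H t t' H1 H2; rewrite (H t H1), (H t' H2); reflexivity. Qed.

Lemma nash00 : nash th th (pure1 Faithful, pure2 Fast).
Proof.
  unfold nash, mixed1, mixed2, eu; simpl.
  repeat split; try lra; intros s [h1 [h2 h3]]; lra.
Qed.

Lemma supp_m0 t : In t (supp m0) -> t = th.
Proof. simpl. intros [H|[]]; auto. Qed.

Lemma supp_entry t x e : In t (supp (entry m0 x e)) -> t = th \/ t = x.
Proof. simpl. intros [H|[H|[]]]; auto. Qed.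

Lemma Pi1_m0 b t : Pi1 m0 b t = E1 (b t th).
Proof. unfold Pi1, m0, E1; simpl; ring. Qed.
Lemma Pi2_m0 b t : Pi2 m0 b t = E2 (b th t).
Proof. unfold Pi2, m0, E2; simpl; ring. Qed.
Lemma Pi1_e b t x e : Pi1 (entry m0 x e) b t = (1-e) * E1 (b t th) + e * E1 (b t x).
Proof. unfold Pi1, m0, E1; simpl; ring. Qed.
Lemma Pi2_e b t x e : Pi2 (entry m0 x e) b t = (1-e) * E2 (b th t) + e * E2 (b x t).
Proof. unfold Pi2, m0, E2; simpl; ring. Qed.

Lemma E1_b0 : E1 (b0 th th) = 5.
Proof. unfold E1, eu; simpl; ring. Qed.
Lemma E2_b0 : E2 (b0 th th) = 5.
Proof. unfold E2, eu; simpl; ring. Qed.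

Lemma in_th : In th (supp m0).
Proof. simpl; auto. Qed.
Lemma in_e0 x e : In th (supp (entry m0 x e)).
Proof. simpl; auto. Qed.
Lemma in_e1 x e : In x (supp (entry m0 x e)).
Proof. simpl; auto. Qed.

Theorem mainTheorem6 : stable_profile (pure1 Faithful) (pure2 Fast).
Proof.
  exists m0, m0, b0.
  assert (Hv : valid_dist m0).
  { unfold valid_dist, m0; simpl. split; [constructor; [auto|constructor]|].
    split; [intros p [H|[]]; subst; simpl; lra | lra]. }
  split; [exact Hv|]. split; [exact Hv|].
  split.
  { intros t1 t2 H1 H2. apply supp_m0 in H1; apply supp_m0 in H2; subst. exact nash00. }
  split.
  2:{ intros a1 a2. unfold aggregate, m0, b0; simpl. ring. }
  split.
  { split; intros t t' H1 H2; apply supp_m0 in H1; apply supp_m0 in H2; subst; reflexivity. }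
  intros J1 J2 HJ t1 t2 HN1 HN2.
  destruct J1, J2.
  -
    exists (1/2). split; [lra|].
    intros e1 e2 He1 He2. specialize (He1 eq_refl); specialize (He2 eq_refl).
    cbv beta iota zeta. intros b' [HB Hb].
    assert (Hthth : b' th th = b0 th th) by (apply Hb; apply in_th).
    destruct (nash_col t1 (b' t1 th)) as [Ha1 Ha2].
    { apply HB; [apply in_e1|apply in_e0]. }
    destruct (nash_row t2 (b' th t2)) as [Hr1 Hr2].
    { apply HB; [apply in_e0|apply in_e1]. }
    assert (Hn : nash t1 t2 (b' t1 t2)) by (apply HB; [apply in_e1|apply in_e1]).
    destruct Hn as [Hm1 [Hm2 _]].
    destruct (mixed_facts _ Hm1 Hm2) as [Hd1 Hd2].
    destruct (arith e1 e2 (E1 (b' t1 th)) (E1 (b' th t2)) (E1 (b' t1 t2))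
                (E2 (b' th t2)) (E2 (b' t1 t2)) He1 He2 Ha2 Hr1 Hd1 Hd2 Hr2)
      as [G|[G|[G1 G2]]].
    + left; left. split; [reflexivity|]. intros t Ht. apply supp_m0 in Ht; subst.
      rewrite !Pi1_e, Hthth, E1_b0. lra.
    + left; right. split; [reflexivity|]. intros t Ht. apply supp_m0 in Ht; subst.
      rewrite !Pi2_e, Hthth, E2_b0. rewrite <- Ha1; exact G.
    + right. split.
      * apply (all_eq _ _ ((1 - e2) * 5 + e2 * E1 (b' th t2))).
        intros t Ht; apply supp_entry in Ht; destruct Ht; subst;
          rewrite Pi1_e; [rewrite Hthth, E1_b0|]; lra.
      * apply (all_eq _ _ ((1 - e1) * 5 + e1 * E1 (b' t1 th))).
        intros t Ht; apply supp_entry in Ht; destruct Ht; subst;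
          rewrite Pi2_e; [rewrite Hthth, E2_b0|]; rewrite Ha1 in *; lra.
  -
    exists (1/2). split; [lra|].
    intros e1 e2 He1 _. specialize (He1 eq_refl).
    cbv beta iota zeta. intros b' [HB Hb].
    assert (Hthth : b' th th = b0 th th) by (apply Hb; apply in_th).
    destruct (nash_col t1 (b' t1 th)) as [Ha1 Ha2].
    { apply HB; [apply in_e1|apply in_th]. }
    destruct (Rle_lt_or_eq_dec _ _ (proj2 Ha2)) as [L|E].
    + left; left. split; [reflexivity|]. intros t Ht. apply supp_m0 in Ht; subst.
      rewrite !Pi1_m0, Hthth, E1_b0. lra.
    + right. split.
      * apply (all_eq _ _ 5).
        intros t Ht; apply supp_entry in Ht; destruct Ht; subst;
          rewrite Pi1_m0; [rewrite Hthth, E1_b0|]; lra.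
      * apply (all_eq _ _ (Pi2 (entry m0 t1 e1) b' th)).
        intros t Ht; apply supp_m0 in Ht; subst; reflexivity.
  -
    exists (1/2). split; [lra|].
    intros e1 e2 _ He2. specialize (He2 eq_refl).
    cbv beta iota zeta. intros b' [HB Hb].
    assert (Hthth : b' th th = b0 th th) by (apply Hb; apply in_th).
    destruct (nash_row t2 (b' th t2)) as [Hr1 Hr2].
    { apply HB; [apply in_th|apply in_e1]. }
    destruct (Rle_lt_or_eq_dec _ _ Hr1) as [L|E].
    + left; right. split; [reflexivity|]. intros t Ht. apply supp_m0 in Ht; subst.
      rewrite !Pi2_m0, Hthth, E2_b0. lra.
    + right. split.
      * apply (all_eq _ _ (Pi1 (entry m0 t2 e2) b' th)).
        intros t Ht; apply supp_m0 in Ht; subst; reflexivity.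
      * apply (all_eq _ _ 5).
        intros t Ht; apply supp_entry in Ht; destruct Ht; subst;
          rewrite Pi2_m0; [rewrite Hthth, E2_b0|]; lra.
  - destruct HJ as [H|H]; discriminate.
Qed.
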